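(* Let $K$ be a finite field, $n\ge 1$, and let $P=(p_1,\ldots,p_n)$ and $Q=(q_1,\ldots,q_n)$ be two distinct points of $K^n$. Let $I=I(\{P,Q\})\subseteq K[x_1,\ldots,x_n]$ be the ideal of these two points. Then the number $N^2_n$ of distinct reduced Gröbner bases of $I$, taken over all monomial orders, is $$N^2_n = n-\sum_{i=1}^n B_0(p_i-q_i),$$ where $B_0(x)=1$ if $x=0$ and $B_0(x)=0$ if $x\neq 0$. Equivalently, $N^2_n$ equals the number of coordinates $i$ with $p_i\neq q_i$.
   Context: For a finite set $S\subseteq K^n$, the ideal of points is $I(S)=\{h\in K[x_1,\ldots,x_n] : h(s)=0 \text{ for all } s\in S\}$. A monomial order is a total well-order on monomials compatible with multiplication. A Gröbner basis $G$ of $I$ with respect to $\prec$ is reduced if every leading coefficient is $1$ and no leading term of an element of $G$ divides any term of another element of $G$; each monomial order gives exactly one reduced Gröbner basis, and the number of reduced Gröbner bases of $I$ means the number of distinct such sets as $\prec$ ranges over all monomial orders. *)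

(* Defs.v *)
From HB Require Import structures.
From mathcomp Require Import all_boot all_order all_algebra.
From mathcomp Require Import finmap.
From mathcomp Require Export mpoly.
Set Implicit Arguments. Unset Strict Implicit. Unset Printing Implicit Defensive.
Import GRing.Theory.
Local Open Scope ring_scope.

Section Defs.
Variables (K : fieldType) (n : nat).

Definition monomial_order (le : rel 'X_{1..n}) : Prop :=
  [/\ reflexive le, antisymmetric le, transitive le & total le]
  /\ well_founded (fun a b => le a b && (a != b))
  /\ (forall m1 m2 m3 : 'X_{1..n}, le m1 m2 -> le (m1 + m3)%MM (m2 + m3)%MM).

Definition is_lead_mon (le : rel 'X_{1..n}) (p : {mpoly K[n]}) (m : 'X_{1..n}) : Prop :=
  m \in msupp p /\ forall m', m' \in msupp p -> le m' m.

Definition ideal_of_points (S : ('I_n -> K) -> Prop) (h : {mpoly K[n]}) : Prop :=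
  forall s, S s -> h.@[s] = 0.

Definition is_reduced_groebner_basis (le : rel 'X_{1..n})
    (I : {mpoly K[n]} -> Prop) (G : {fset {mpoly K[n]}}) : Prop :=
  [/\
      forall g, g \in G -> I g,
      (* Groebner basis: leading monomials of G generate the leading ideal of I *)
      forall f, I f -> f != 0 ->
        exists2 g, g \in G & exists mg mf,
          [/\ is_lead_mon le g mg, is_lead_mon le f mf & (mg <= mf)%MM],
      forall g, g \in G -> exists mg, is_lead_mon le g mg /\ g@_mg = 1 &
      forall g g', g \in G -> g' \in G -> g != g' ->
        forall mg, is_lead_mon le g mg ->
        forall m, m \in msupp g' -> ~~ (mg <= m)%MM].

End Defs.

Definition B0 (K : fieldType) (x : K) : nat := if x == 0 then 1%N else 0%N.

(* Main.v *)
Require Import Defs.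
From HB Require Import structures.
From mathcomp Require Import all_boot all_order all_algebra all_field.
From mathcomp Require Import finmap.
From mathcomp Require Import mpoly.
From mathcomp Require Import all_fingroup.
From mathcomp Require Import ring.
From Stdlib Require Import FunctionalExtensionality.
Module MA.
Set Implicit Arguments. Unset Strict Implicit. Unset Printing Implicit Defensive.
Import GRing.Theory.
Local Open Scope ring_scope.
Local Open Scope fset_scope.

Section MO.
Variables (K : fieldType) (n : nat) (le : rel 'X_{1..n}).
Hypothesis mo : monomial_order le.

Lemma mo_refl m : le m m. Proof. by case: mo => [[r _ _ _] _]; apply r. Qed.
Lemma mo_anti m1 m2 : le m1 m2 -> le m2 m1 -> m1 = m2.
Proof. by case: mo => [[_ a _ _] _] h1 h2; apply a; rewrite h1 h2. Qed.
Lemma mo_trans m1 m2 m3 : le m1 m2 -> le m2 m3 -> le m1 m3.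
Proof. by case: mo => [[_ _ t _] _] h1 h2; apply: t h1 h2. Qed.
Lemma mo_total m1 m2 : le m1 m2 || le m2 m1.
Proof. by case: mo => [[_ _ _ t] _]; apply t. Qed.
Lemma mo_add m1 m2 m3 : le m1 m2 -> le (m1 + m3)%MM (m2 + m3)%MM.
Proof. by case: mo => [_ [_ h]]; apply h. Qed.

Lemma mo_le0 m : le 0%MM m.
Proof.
case: (boolP (le 0%MM m)) => // h0.
have hm : le m 0%MM by move: (mo_total 0%MM m); rewrite (negbTE h0).
have hm0 : m != 0%MM by apply: contraNneq h0 => ->; apply mo_refl.
case: mo => [_ [wf _]].
suff : forall a, Acc (fun a b => le a b && (a != b)) a -> False.
  by move=> H; case: (H _ (wf 0%MM)).
move=> a; elim=> {}a _ IH; apply: (IH (a + m)%MM).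
apply/andP; split.
  by have := mo_add a hm; rewrite addmC add0m addmC.
by rewrite -{2}[a]addm0 eqm_add2l.
Qed.

Lemma mo_div m1 m2 : (m1 <= m2)%MM -> le m1 m2.
Proof.
move=> h; rewrite -(submK h).
by have := mo_add m1 (mo_le0 (m2 - m1)%MM); rewrite add0m.
Qed.

Lemma lead_uniq (p : {mpoly K[n]}) m1 m2 :
  is_lead_mon le p m1 -> is_lead_mon le p m2 -> m1 = m2.
Proof. by case=> h1 H1 [h2 H2]; apply: mo_anti; [apply H2|apply H1]. Qed.

Lemma exists_lead (p : {mpoly K[n]}) : p != 0 -> exists m, is_lead_mon le p m.
Proof.
rewrite -msupp_eq0 /is_lead_mon.
elim: (msupp p) => [//|x s IH] _.
case: (eqVneq s [::]) => [->|/IH [y [ys Hy]]].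
  by exists x; split; rewrite ?inE // => m; rewrite inE => /eqP ->; apply mo_refl.
case/orP: (mo_total x y) => hxy.
  exists y; split; first by rewrite inE ys orbT.
  by move=> m; rewrite inE => /orP [/eqP ->|/Hy].
exists x; split; first by rewrite inE eqxx.
move=> m; rewrite inE => /orP [/eqP ->|/Hy h]; first by apply mo_refl.
exact: mo_trans h hxy.
Qed.

Lemma lead_neq0 (p : {mpoly K[n]}) m : is_lead_mon le p m -> p != 0.
Proof. by case=> h _; apply: contraTneq h => ->; rewrite msupp0. Qed.

Variable (I : {mpoly K[n]} -> Prop).
Hypothesis IB : forall f g, I f -> I g -> I (f - g).

Lemma rgb_sub G1 G2 : is_reduced_groebner_basis le I G1 ->
  is_reduced_groebner_basis le I G2 -> {subset G1 <= G2}.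
Proof.
move=> [I1 Gr1 M1 R1] [I2 Gr2 M2 R2] g gG1.
have [mg [[mgs mgH] mgc]] := M1 g gG1.
have hmg : is_lead_mon le g mg by [].
have [g' g'G2 [mg' [mf1 [hmg' hmf dv]]]] := Gr2 g (I1 g gG1) (lead_neq0 hmg).
rewrite -(lead_uniq hmg hmf) in dv.
have [g'' g''G1 [mg'' [mf' [hmg'' hmf' dv']]]] := Gr1 g' (I2 g' g'G2) (lead_neq0 hmg').
rewrite -(lead_uniq hmg' hmf') in dv'.
have dv2 : (mg'' <= mg)%MM by apply: lepm_trans dv' dv.
have eg : g'' = g.
  apply/eqP; apply/negPn/negP => ne.
  by move: (R1 _ _ g''G1 gG1 ne _ hmg'' _ mgs); rewrite dv2.
rewrite eg in hmg''; rewrite (lead_uniq hmg'' hmg) in dv'.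
have emg : mg' = mg by apply: mo_anti; apply: mo_div.
rewrite emg in hmg'.
have [mg0 [hmg0 c']] := M2 g' g'G2.
rewrite -(lead_uniq hmg' hmg0) in c'.
case: (eqVneq (g - g') 0) => [/eqP|hne]; first by rewrite subr_eq0 => /eqP ->.
exfalso.
have [g3 g3G1 [m3 [mf [hm3 hmf3 dv3]]]] := Gr1 _ (IB (I1 g gG1) (I2 g' g'G2)) hne.
have [g4 g4G2 [m4 [mf4 [hm4 hmf4 dv4]]]] := Gr2 _ (IB (I1 g gG1) (I2 g' g'G2)) hne.
rewrite -(lead_uniq hmf3 hmf4) in dv4.
case: hmf3 => mfs _.
have mfne : mf != mg.
  apply: contraTneq mfs => ->.
  by rewrite mcoeff_msupp mcoeffB mgc c' subrr eqxx.
move: mfs; rewrite mcoeff_msupp mcoeffB.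
case: (boolP (mf \in msupp g)) => [mfg|].
  move=> _; case: (eqVneq g3 g) => [e3|ne3].
    rewrite e3 in hm3; rewrite (lead_uniq hm3 hmg) in dv3.
    have := mo_anti (mo_div dv3) (mgH _ mfg).
    by move=> e; move: mfne; rewrite e eqxx.
  by move: (R1 _ _ g3G1 gG1 ne3 _ hm3 _ mfg); rewrite dv3.
rewrite mcoeff_msupp negbK => /eqP ->; rewrite sub0r oppr_eq0 => mfg'.
rewrite -mcoeff_msupp in mfg'.
case: (eqVneq g4 g') => [e4|ne4].
  rewrite e4 in hm4; rewrite (lead_uniq hm4 hmg') in dv4.
  case: hmg' => _ H'.
  have := mo_anti (mo_div dv4) (H' _ mfg').
  by move=> e; move: mfne; rewrite e eqxx.
by move: (R2 _ _ g4G2 g'G2 ne4 _ hm4 _ mfg'); rewrite dv4.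
Qed.

Lemma rgb_uniq G1 G2 : is_reduced_groebner_basis le I G1 ->
  is_reduced_groebner_basis le I G2 -> G1 = G2.
Proof.
move=> h1 h2; apply/fsetP => g; apply/idP/idP => hg; [exact: (rgb_sub h1 h2 hg)|exact: (rgb_sub h2 h1 hg)].
Qed.

End MO.
End MA.
Import MA.
Module MB.
Set Implicit Arguments. Unset Strict Implicit. Unset Printing Implicit Defensive.
Import GRing.Theory.
Local Open Scope ring_scope.


Section Polys.
Variables (K : fieldType) (n : nat) (P Q : 'I_n -> K) (k : 'I_n).

Definition cc (i : 'I_n) := (P i - Q i) / (P k - Q k).
Definition gk (i : 'I_n) : {mpoly K[n]} :=
  'X_[(mnm1 i)] - cc i *: 'X_[(mnm1 k)] - (P i - cc i * P k) *: 'X_[0%MM].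
Definition quad : {mpoly K[n]} :=
  'X_[((mnm1 k) + (mnm1 k))%MM] - (P k + Q k) *: 'X_[(mnm1 k)] + (P k * Q k) *: 'X_[0%MM].
Definition Gk : {fset {mpoly K[n]}} :=
  (quad |` [fset gk i | i in [seq j <- enum 'I_n | j != k]])%fset.

Lemma in_Gk g : g \in Gk <-> g = quad \/ exists2 i, i != k & g = gk i.
Proof.
rewrite /Gk in_fset1U; split.
  case/orP => [/eqP ->|/imfsetP [i]]; first by left.
  by rewrite /= mem_filter => /andP [hi _] ->; right; exists i.
case => [->|[i hi ->]]; first by rewrite eqxx.
by apply/orP; right; apply/imfsetP; exists i => //=; rewrite mem_filter hi mem_enum.
Qed.

Lemma gk_coef i m : (gk i)@_m =
  ((mnm1 i) == m)%:R - cc i * ((mnm1 k) == m)%:R - (P i - cc i * P k) * (0%MM == m)%:R.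
Proof. by rewrite /gk !mcoeffB !mcoeffZ !mcoeffX. Qed.

Lemma quad_coef m : quad@_m =
  (((mnm1 k) + (mnm1 k))%MM == m)%:R - (P k + Q k) * ((mnm1 k) == m)%:R + (P k * Q k) * (0%MM == m)%:R.
Proof. by rewrite /quad mcoeffD mcoeffB !mcoeffZ !mcoeffX. Qed.

Lemma gk_supp i m : m \in msupp (gk i) ->
  [\/ m = (mnm1 i), m = (mnm1 k) /\ cc i != 0 | m = 0%MM].
Proof.
rewrite mcoeff_msupp gk_coef.
case: (eqVneq (mnm1 i) m) => [->|_]; first by move=> _; apply Or31.
case: (eqVneq 0%MM m) => [<-|_]; first by move=> _; apply Or33.
case: (eqVneq (mnm1 k) m) => [<-|_]; last by rewrite !mulr0 !subr0 eqxx.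
by rewrite !mulr0 sub0r subr0 oppr_eq0 mulr1 => h; apply Or32.
Qed.

Lemma quad_supp m : m \in msupp quad ->
  [\/ m = ((mnm1 k) + (mnm1 k))%MM, m = (mnm1 k) | m = 0%MM].
Proof.
rewrite mcoeff_msupp quad_coef.
case: (eqVneq ((mnm1 k) + (mnm1 k))%MM m) => [->|_]; first by move=> _; apply Or31.
case: (eqVneq 0%MM m) => [<-|_]; first by move=> _; apply Or33.
case: (eqVneq (mnm1 k) m) => [<-|_]; last by rewrite !mulr0 subr0 addr0 eqxx.
by move=> _; apply Or32.
Qed.

Hypothesis hk : P k != Q k.

Lemma cc_eq i : cc i * (P k - Q k) = P i - Q i.
Proof. by rewrite /cc divfK // subr_eq0. Qed.

Lemma cc_neq0 i : cc i != 0 -> P i != Q i.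
Proof. by apply: contraNneq => e; rewrite /cc e subrr mul0r. Qed.

Lemma evalU (v : 'I_n -> K) i : ('X_[(mnm1 i)] : {mpoly K[n]}).@[v] = v i.
Proof. exact: mevalXU. Qed.

Lemma eval0 (v : 'I_n -> K) : ('X_[0%MM] : {mpoly K[n]}).@[v] = 1.
Proof. by rewrite mpolyX0 meval1. Qed.

Lemma gk_eval i : (gk i).@[P] = 0 /\ (gk i).@[Q] = 0.
Proof.
rewrite /gk !mevalB !mevalZ !evalU !eval0 !mulr1; split; first by ring.
have := cc_eq i => e.
have -> : Q i = P i - cc i * (P k - Q k) by rewrite e; ring.
ring.
Qed.

Lemma quad_eval : quad.@[P] = 0 /\ quad.@[Q] = 0.
Proof.
by rewrite /quad !mevalD !mevalN !mevalZ mpolyXD !mevalM !evalU !eval0 !mulr1; split; ring.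
Qed.

End Polys.
End MB.
Import MB.
Module MC.
Set Implicit Arguments. Unset Strict Implicit. Unset Printing Implicit Defensive.
Import GRing.Theory.
Local Open Scope ring_scope.

Section Red.
Variables (K : fieldType) (n : nat) (P Q : 'I_n -> K) (k : 'I_n).
Variables (le : rel 'X_{1..n}) (mo : monomial_order le).
Hypothesis hk : P k != Q k.
Hypothesis hmin : forall i, P i != Q i -> le (mnm1 k) (mnm1 i).

Local Notation I := (ideal_of_points (fun s => s = P \/ s = Q)).

Lemma I_P f : I f -> f.@[P] = 0 /\ f.@[Q] = 0.
Proof. by move=> h; split; apply h; [left|right]. Qed.

Lemma P_I f : f.@[P] = 0 -> f.@[Q] = 0 -> I f.
Proof. by move=> h1 h2 s [->|->]. Qed.

Lemma evalsplit (f : {mpoly K[n]}) v m0 : f.@[v] =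
  f@_m0 * \prod_(i < n) v i ^+ m0 i +
  \sum_(m <- msupp f | m != m0) f@_m * \prod_(i < n) v i ^+ m i.
Proof.
rewrite mevalE; case: (boolP (m0 \in msupp f)) => h.
  by rewrite (bigD1_seq _ h (msupp_uniq f)).
move: (h); rewrite mcoeff_msupp negbK => /eqP ->; rewrite mul0r add0r.
rewrite [RHS]big_seq_cond [LHS]big_seq; apply: eq_bigl => m.
by case: (boolP (m \in msupp f)) => // hm; apply/esym/eqP => e; rewrite -e hm in h.
Qed.

Lemma monoU (v : 'I_n -> K) i : \prod_(j < n) v j ^+ (mnm1 i) j = v i.
Proof. by rewrite -mevalX mevalXU. Qed.

Lemma key f mf : I f -> is_lead_mon le f mf -> mf = 0%MM \/ mf = mnm1 k -> False.
Proof.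
move=> If [mfs H] hmf.
have Hk : forall m, m \in msupp f -> le m (mnm1 k).
  move=> m hm; apply: (mo_trans mo (H m hm)).
  by case: hmf => ->; [apply: mo_le0|apply: mo_refl].
have Z : forall m, m \in msupp f -> m != mnm1 k -> forall i, P i != Q i -> m i = 0%N.
  move=> m hm ne i hi; apply/eqP; apply/negPn/negP; rewrite -lep1mP => d.
  have l1 := mo_div mo d.
  have l2 := Hk m hm.
  have l3 := hmin hi.
  have e1 : m = mnm1 i by apply: (mo_anti mo) => //; apply: (mo_trans mo l2 l3).
  have e2 : mnm1 i = mnm1 k by apply: (mo_anti mo) => //; rewrite -e1.
  by move: ne; rewrite e1 e2 eqxx.
have Mo : forall m, m \in msupp f -> m != mnm1 k ->
    \prod_(i < n) P i ^+ m i = \prod_(i < n) Q i ^+ m i.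
  move=> m hm ne; apply: eq_bigr => i _.
  case: (eqVneq (P i) (Q i)) => [->//|hi]; by rewrite (Z m hm ne i hi) !expr0.
have [fP fQ] := I_P If.
have : f.@[P] - f.@[Q] = f@_(mnm1 k) * (P k - Q k).
  rewrite (evalsplit f P (mnm1 k)) (evalsplit f Q (mnm1 k)) !monoU.
  rewrite [X in _ + X - _]big_seq_cond [X in _ - (_ + X)]big_seq_cond.
  rewrite (eq_bigr (fun m => f@_m * \prod_(i < n) Q i ^+ m i)); last first.
    by move=> m /andP [hm ne]; rewrite (Mo m hm ne).
  ring.
rewrite fP fQ subrr => /esym /eqP; rewrite mulf_eq0 subr_eq0 (negbTE hk) orbF.
rewrite mcoeff_eq0 => nk.
case: hmf => e; last by move: mfs nk; rewrite e => ->.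
have all0 : forall m, m \in msupp f -> m = 0%MM.
  by move=> m hm; apply: (mo_anti mo); [rewrite -e; apply H|apply mo_le0].
move: fP; rewrite (evalsplit f P 0%MM) [X in _ + X]big_seq_cond [X in _ + X]big1; last first.
  by move=> m /andP [hm ne]; rewrite (all0 m hm) eqxx in ne.
rewrite addr0 big1 ?mulr1; last by move=> i _; rewrite mnm0E expr0.
by move/eqP; rewrite mcoeff_eq0 -e mfs.
Qed.


Local Notation G := (Gk P Q k).

Lemma UU_neq : (mnm1 k == (mnm1 k + mnm1 k)%MM) = false.
Proof. by apply/eqP => /mnmP /(_ k); rewrite mnmDE !mnm1E eqxx. Qed.
Lemma UU0_neq : (0%MM == (mnm1 k + mnm1 k)%MM :> 'X_{1..n}) = false.
Proof. by apply/eqP => /mnmP /(_ k); rewrite mnmDE !mnm1E mnm0E eqxx. Qed.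
Lemma U0_neq i : (0%MM == mnm1 i :> 'X_{1..n}) = false.
Proof. by rewrite eq_sym mnm1_eq0. Qed.

Lemma lead_gk i : i != k ->
  is_lead_mon le (gk P Q k i) (mnm1 i) /\ (gk P Q k i)@_(mnm1 i) = 1.
Proof.
move=> ik.
have c1 : (gk P Q k i)@_(mnm1 i) = 1.
  by rewrite gk_coef eqxx eq_mnm1 eq_sym (negbTE ik) U0_neq !mulr0 !subr0.
split => //; split; first by rewrite mcoeff_msupp c1 oner_neq0.
move=> m /gk_supp [->|[-> /cc_neq0 h]|->].
- exact: mo_refl.
- exact: hmin.
- exact: mo_le0.
Qed.

Lemma lead_quad :
  is_lead_mon le (quad P Q k) (mnm1 k + mnm1 k)%MM /\
  (quad P Q k)@_(mnm1 k + mnm1 k)%MM = 1.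
Proof.
have c1 : (quad P Q k)@_(mnm1 k + mnm1 k)%MM = 1.
  by rewrite quad_coef eqxx UU_neq UU0_neq !mulr0 subr0 addr0.
split => //; split; first by rewrite mcoeff_msupp c1 oner_neq0.
move=> m /quad_supp [->|->|->].
- exact: mo_refl.
- by apply: (mo_div mo); apply: lem_addr.
- exact: mo_le0.
Qed.

Lemma Gk_rgb : is_reduced_groebner_basis le I G.
Proof.
split.
- move=> g /in_Gk [->|[i _ ->]].
    by have [h1 h2] := quad_eval P Q k; apply: P_I.
  by have [h1 h2] := gk_eval hk i; apply: P_I.
- move=> f If f0; have [mf hmf] := exists_lead mo f0.
  case: (boolP [exists j, (j != k) && (mf j != 0%N)]).
    case/existsP => j /andP [jk mfj]; exists (gk P Q k j).
      by apply/in_Gk; right; exists j.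
    exists (mnm1 j), mf; split => //; first by case: (lead_gk jk).
    by rewrite lep1mP.
  rewrite negb_exists => /forallP Hz.
  have z : forall j, j != k -> mf j = 0%N.
    by move=> j jk; move: (Hz j); rewrite jk /= negbK => /eqP.
  case: (leqP 2 (mf k)) => h2.
    exists (quad P Q k); first by apply/in_Gk; left.
    exists (mnm1 k + mnm1 k)%MM, mf; split => //; first by case: lead_quad.
    apply/mnm_lepP => i; rewrite mnmDE !mnm1E.
    by case: (eqVneq k i) => [<-//|ki]; rewrite addn0.
  exfalso; apply: (key If hmf).
  move: h2; rewrite ltnS leq_eqVlt ltnS leqn0 => /orP [] /eqP hk1; [right|left];
    apply/mnmP => i; rewrite ?mnm1E ?mnm0E;
    (case: (eqVneq k i) => [<-//|ki]; apply: z; by rewrite eq_sym).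
- move=> g /in_Gk [->|[i ik ->]].
    by exists (mnm1 k + mnm1 k)%MM; apply lead_quad.
  by exists (mnm1 i); apply lead_gk.
- move=> g g' /in_Gk hg /in_Gk hg' ne mg hmg m hm.
  case: hg => [eg|[a ak eg]]; subst g.
    have [hq _] := lead_quad; rewrite (lead_uniq mo hmg hq).
    case: hg' => [eg'|[b bk eg']]; first by rewrite eg' eqxx in ne.
    subst g'; apply/negP => /mnm_lepP /(_ k); rewrite mnmDE mnm1E eqxx.
    case/gk_supp: hm => [->|[-> _]|->]; rewrite ?mnm1E ?mnm0E //.
    1,2: by [case: (b == k) | rewrite eqxx].
  have [hq _] := lead_gk ak; rewrite (lead_uniq mo hmg hq) lep1mP negbK.
  case: hg' => [eg'|[b bk eg']]; subst g'.
    by case/quad_supp: hm => [->|->|->]; rewrite ?mnmDE ?mnm1E ?mnm0E // [k == a]eq_sym (negbTE ak).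
  have ab : b != a by apply: contraNneq ne => ->.
  case/gk_supp: hm => [->|[-> _]|->]; rewrite ?mnm1E ?mnm0E //.
  - by rewrite (negbTE ab).
  - by rewrite [k == a]eq_sym (negbTE ak).
Qed.

End Red.
End MC.
Import MC.
Module MD.
Set Implicit Arguments. Unset Strict Implicit. Unset Printing Implicit Defensive.
Import GRing.Theory.
Local Open Scope ring_scope.

Section Ord.
Variables (n : nat) (s : 'S_n).

Definition mperm (m : 'X_{1..n}) : 'X_{1..n} := [multinom m (s i) | i < n].
Definition lep (m1 m2 : 'X_{1..n}) := (mperm m1 <= mperm m2)%O.

Lemma mpermD m1 m2 : mperm (m1 + m2)%MM = (mperm m1 + mperm m2)%MM.
Proof. by apply/mnmP => i; rewrite !mnmE. Qed.

Lemma mperm_inj : injective mperm.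
Proof.
move=> m1 m2 /mnmP e; apply/mnmP => i.
by move: (e (s^-1 i)%g); rewrite !mnmE permKV.
Qed.

Lemma lep_mo : monomial_order lep.
Proof.
split; [split|split].
- by move=> m; apply: Order.POrderTheory.le_refl.
- move=> m1 m2 /andP [h1 h2]; apply: mperm_inj.
  by apply: Order.POrderTheory.le_anti; apply/andP; split.
- by move=> m2 m1 m3; apply: Order.POrderTheory.le_trans.
- by move=> m1 m2; apply: Order.TotalTheory.le_total.
- suff H : forall x a, mperm a = x -> Acc (fun a b => lep a b && (a != b)) a.
    by move=> a; apply: (H _ a erefl).
  elim/(@ltmwf n) => x IH a ea; constructor => b /andP [hb nb].
  apply: (IH (mperm b)) => //; rewrite -ea Order.POrderTheory.lt_def; apply/andP; split => //.
  by apply: contraNneq nb => /mperm_inj ->.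
- by move=> m1 m2 m3; rewrite /lep !mpermD lemc_add2l.
Qed.

End Ord.

Lemma U_last_min n (j : 'I_n.+1) : ((mnm1 ord_max : 'X_{1..n.+1}) <= mnm1 j)%O.
Proof.
case: (eqVneq j ord_max) => [->|jn]; first exact: Order.POrderTheory.le_refl.
apply: Order.POrderTheory.ltW; apply/ltmcP; first by rewrite !mdeg1.
exists j; last by rewrite !mnm1E eqxx eq_sym (negbTE jn).
move=> j' lt; rewrite !mnm1E; case: (eqVneq ord_max j') => [e|_].
  by move: lt; rewrite -e ltnNge -ltnS ltn_ord.
by case: (eqVneq j j') => // e; move: lt; rewrite e ltnn.
Qed.

Lemma exists_order n (k : 'I_n.+1) : exists le : rel 'X_{1..n.+1},
  monomial_order le /\ forall i, le (mnm1 k) (mnm1 i).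
Proof.
exists (lep (tperm k ord_max)); split; first exact: lep_mo.
have E : forall j, mperm (tperm k ord_max) (mnm1 j) = mnm1 (tperm k ord_max j).
  move=> j; apply/mnmP => i; rewrite !mnmE.
  by rewrite -(inj_eq (@perm_inj _ (tperm k ord_max))) tpermK.
by move=> i; rewrite /lep !E tpermL; apply: U_last_min.
Qed.
End MD.
Import MD.
Unset Implicit Arguments. Set Strict Implicit. Set Printing Implicit Defensive.
Import GRing.Theory.
Local Open Scope ring_scope.
Local Open Scope fset_scope.

Lemma exists_min (m : nat) (le : rel 'X_{1..m}) (mo : monomial_order le)
  (T : eqType) (f : T -> 'X_{1..m}) (s : seq T) : s != [::] ->
  exists2 k, k \in s & forall i, i \in s -> le (f k) (f i).
Proof.
elim: s => [//|x s IH] _.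
case: (eqVneq s [::]) => [->|/IH [y ys Hy]].
  by exists x; rewrite ?inE // => i; rewrite inE => /eqP ->; apply: mo_refl.
case/orP: (mo_total mo (f x) (f y)) => hxy.
  exists x; first by rewrite inE eqxx.
  move=> i; rewrite inE => /orP [/eqP ->|/Hy h]; first by apply: mo_refl.
  exact: (mo_trans mo hxy h).
exists y; first by rewrite inE ys orbT.
by move=> i; rewrite inE => /orP [/eqP ->|/Hy].
Qed.

Lemma UU_U (m : nat) (a b : 'I_m) : (mnm1 a == (mnm1 b + mnm1 b)%MM) = false.
Proof. by apply/eqP => /(congr1 mdeg); rewrite mdegD !mdeg1. Qed.
Lemma UU_UU (m : nat) (a b : 'I_m) :
  ((mnm1 a + mnm1 a)%MM == (mnm1 b + mnm1 b)%MM) = (a == b).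
Proof.
apply/eqP/eqP => [/mnmP /(_ b)|->//]; rewrite !mnmDE !mnm1E eqxx.
by case: eqP.
Qed.
Lemma U0_UU (m : nat) (b : 'I_m) : (0%MM == (mnm1 b + mnm1 b)%MM) = false.
Proof. by apply/eqP => /(congr1 mdeg); rewrite mdegD !mdeg1 mdeg0. Qed.

Lemma Gk_inj (K : fieldType) (m : nat) (P Q : 'I_m -> K) : injective (Gk P Q).
Proof.
move=> k1 k2 e; apply/eqP/negPn/negP => ne.
have : quad P Q k1 \in Gk P Q k1 by apply/in_Gk; left.
rewrite e => /in_Gk h.
have c1 : (quad P Q k1)@_(mnm1 k1 + mnm1 k1)%MM = 1.
  by rewrite quad_coef eqxx UU_U U0_UU !mulr0 subr0 addr0.
case: h => [e2|[i _ e2]]; move: c1; rewrite e2.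
  by rewrite quad_coef UU_UU eq_sym (negbTE ne) UU_U U0_UU !mulr0 subr0 addr0 => /eqP; rewrite eq_sym oner_eq0.
by rewrite gk_coef !UU_U U0_UU !mulr0 !subr0 => /eqP; rewrite eq_sym oner_eq0.
Qed.

Theorem theorem3 (K : finFieldType) (n : nat) (hn : (1 <= n)%N)
    (P Q : 'I_n -> K) (hPQ : P <> Q) :
  exists S : {fset {fset {mpoly K[n]}}},
    (forall G : {fset {mpoly K[n]}},
       G \in S <->
       exists le : rel 'X_{1..n},
         monomial_order le /\
         is_reduced_groebner_basis le
           (ideal_of_points (fun s => s = P \/ s = Q)) G) /\
    #|` S| = (n - \sum_(i < n) B0 (P i - Q i))%N.
Proof.
case: n hn P Q hPQ => [//|n'] _ P Q hPQ.
set D := [seq k <- enum 'I_n'.+1 | P k != Q k].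
exists [fset Gk P Q k | k in D]; split.
- move=> G; split.
  + case/imfsetP => k /=; rewrite mem_filter => /andP [hk _] ->.
    have [le [mo hmin]] := exists_order k.
    by exists le; split => //; apply: (Gk_rgb mo hk (fun i _ => hmin i)).
  + case=> le [mo rgb].
    have Dn : D != [::].
      rewrite -has_filter; apply/negPn/negP => /hasPn H; apply: hPQ.
      apply: functional_extensionality => i.
      by move: (H i (mem_enum _ i)); rewrite negbK => /eqP.
    have [k kD kmin] := @exists_min _ _ mo _ (@mnm1 n'.+1) D Dn.
    move: (kD); rewrite mem_filter => /andP [hk _].
    have hmin2 : forall i, P i != Q i -> le (mnm1 k) (mnm1 i).
      by move=> i hi; apply: kmin; rewrite mem_filter hi mem_enum.
    have rgbk := Gk_rgb mo hk hmin2.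
    have IB : forall f g, ideal_of_points (fun s => s = P \/ s = Q) f ->
        ideal_of_points (fun s => s = P \/ s = Q) g ->
        ideal_of_points (fun s => s = P \/ s = Q) (f - g).
      by move=> f g hf hg s hs; rewrite mevalB hf // hg // subrr.
    rewrite (rgb_uniq mo IB rgb rgbk).
    by apply/imfsetP; exists k.
- rewrite card_imfset; last exact: Gk_inj.
  rewrite /= undup_id; last by rewrite filter_uniq // enum_uniq.
  rewrite /D size_filter.
  have -> : (\sum_(i < n'.+1) B0 (P i - Q i) = count (fun i => P i == Q i) (enum 'I_n'.+1))%N.
    rewrite -sum1_count [RHS]big_mkcond [RHS]big_enum /= /B0.
    by apply: eq_bigr => i _; rewrite subr_eq0.
  have h := count_predC (fun i => P i == Q i) (enum 'I_n'.+1).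
  rewrite size_enum_ord in h.
  have e : count (fun k => P k != Q k) (enum 'I_n'.+1) =
    count (predC (fun i => P i == Q i)) (enum 'I_n'.+1) by apply: eq_count.
  rewrite e; move: h; set a := count _ _; set b := count _ _ => h.
  by rewrite -h addKn.
Qed.
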